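(* Let $m\ge3$ be odd, $s$ a positive integer, $n=sm$, and $\Gamma=C_n[mK_1]$. For $i\in\{2,\dots,n\}$ let $\ell_i=1+\frac{(i-2)(i-1)}{2}$, and define $$\sigma_1=(c,1,1,\dots,1)r,\qquad \sigma_2=(t,tc^{\ell_2},tc^{\ell_3},\dots,tc^{\ell_n})z,\qquad G=\langle\sigma_1,\sigma_2\rangle.$$ Then $\sigma_1$ has order $mn$, $\sigma_2$ has order $2m$, $\sigma_1\sigma_2$ has order $2$, and $|G|=2m^2n$.
   Context: $C_n[mK_1]$ is the graph with vertex set $\{1,\dots,n\}\times\{1,\dots,m\}$ in which $(i_1,j_1)$ is adjacent to $(i_2,j_2)$ if and only if $i_1\equiv i_2\pm1\pmod n$ (residues mod $n$ taken in $\{1,\dots,n\}$). Permutations act on the right ($x\alpha$ is the image of $x$) and products are composed left to right, both in $S_m$ and in $\mathrm{Aut}(\Gamma)$. For $\alpha_1,\dots,\alpha_n\in S_m$ and a permutation $x$ of $\{1,\dots,n\}$ in the dihedral group $D_n=\langle r,z\rangle$, $(\alpha_1,\dots,\alpha_n)x$ denotes the automorphism of $\Gamma$ mapping $(i,j)\mapsto(ix,\,j\alpha_i)$; $1$ denotes an identity permutation. Here $c=(1\,2\,\cdots\,m)\in S_m$; $t\in S_m$ fixes $1$ and maps $j\mapsto m-j+2$ for $2\le j\le m$; $r$ is the permutation $i\mapsto i+1 \pmod n$ of $\{1,\dots,n\}$; and $z$ fixes $1$ and maps $j\mapsto n-j+2$ for $2\le j\le n$. *)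

(* Defs.v *)
From mathcomp Require Import all_boot all_fingroup.
Set Implicit Arguments. Unset Strict Implicit. Unset Printing Implicit Defensive.

(* Indices are shifted by one: the paper's i in {1..k} is the ordinal i-1 : 'I_k. *)

(* cyclic shift i |-> i+1 (mod k):  the paper's c (on 'I_m) and r (on 'I_n) *)
Definition rot (k : nat) : {perm 'I_k} := perm (@ordS_inj k).

(* reflection fixing 1, j |-> k-j+2 for 2<=j<=k; 0-based: j0 |-> (k - j0) mod k,
   which equals ordS (rev_ord j0).  The paper's t (on 'I_m) and z (on 'I_n). *)
Definition refl (k : nat) : {perm 'I_k} :=
  perm (inj_comp (@ordS_inj k) (@rev_ord_inj k)).

Definition vtx (n m : nat) := ('I_n * 'I_m)%type.

Definition adj (n m : nat) (u v : vtx n m) : bool :=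
  (v.1 == ordS u.1) || (u.1 == ordS v.1).

Lemma wreath_inj (n m : nat) (alpha : 'I_n -> {perm 'I_m}) (x : {perm 'I_n}) :
  injective (fun u : vtx n m => (x u.1, alpha u.1 u.2)).
Proof.
move=> [i j] [i' j'] /= [] /perm_inj Hi; subst i' => /perm_inj ->; by [].
Qed.

(* (alpha_1,...,alpha_n) x : (i,j) |-> (i x, j alpha_i) *)
Definition wreath (n m : nat) (alpha : 'I_n -> {perm 'I_m}) (x : {perm 'I_n})
  : {perm vtx n m} := perm (@wreath_inj n m alpha x).

(* l_i = 1 + (i-2)(i-1)/2 for the paper's index i = i0+1 >= 2 *)
Definition ell (i0 : nat) : nat := 1 + (i0.-1 * i0) %/ 2.

Definition sigma1 (n m : nat) : {perm vtx n m} :=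
  wreath (fun i : 'I_n => if val i == 0 then rot m else 1%g) (rot n).

Definition sigma2 (n m : nat) : {perm vtx n m} :=
  wreath (fun i : 'I_n => if val i == 0 then refl m
                          else (refl m * rot m ^+ ell i)%g) (refl n).

(* Main.v *)
Require Import Defs.
From mathcomp Require Import all_boot all_order all_fingroup all_algebra.
From mathcomp Require Import cyclic ring zify.
Import GRing.Theory.
Local Open Scope ring_scope.

Lemma rotE k (i : 'I_k.+2) : Defs.rot k.+2 i = i + 1.
Proof. by rewrite /Defs.rot permE; apply: val_inj => /=; rewrite modnDmr addn1. Qed.

Lemma reflE k (i : 'I_k.+2) : refl k.+2 i = - i.
Proof.
apply: val_inj; rewrite /refl permE /=.
have := ltn_ord i; move: (nat_of_ord i) => a Ha.
by congr modn; lia.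
Qed.

Lemma rotX k (i : 'I_k.+2) c : (Defs.rot k.+2 ^+ c)%g i = i + c%:R.
Proof.
elim: c => [|c IH]; first by rewrite expg0 perm1 addr0.
by rewrite expgSr permM IH rotE -addrA -mulrSr.
Qed.

Section Aff.
Variables n m : nat.
Local Notation ZN := 'I_n.+3.
Local Notation ZM := 'I_m.+3.

Definition affF (e : bool) (x : {perm ZN}) (f : ZN -> ZM) (u : ZN * ZM) :=
  (x u.1, (-1) ^+ e * u.2 + f u.1).

Lemma aff_inj e x f : injective (affF e x f).
Proof.
move=> [i j] [i' j'] H.
have /perm_inj Hi : x i = x i' := congr1 fst H; subst i'.
have H2 : (-1) ^+ e * j + f i = (-1) ^+ e * j' + f i := congr1 snd H.
have {H2} : (-1) ^+ e * j = (-1) ^+ e * j' by have := congr1 (fun z => z - f i) H2; rewrite !addrK.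
by clear H; case: e; rewrite ?expr1 ?expr0 ?mul1r ?mulN1r; [move/oppr_inj -> | move ->].
Qed.

Definition aff e x f : {perm ZN * ZM} := perm (@aff_inj e x f).

Lemma affE e x f u : aff e x f u = (x u.1, (-1) ^+ e * u.2 + f u.1).
Proof. by rewrite permE. Qed.

Lemma affM e x f e' y g :
  (aff e x f * aff e' y g)%g =
  aff (e (+) e') (x * y)%g (fun i => (-1) ^+ e' * f i + g (x i)).
Proof.
apply/permP => -[i j]; rewrite permM !affE /= permM; congr pair.
rewrite signr_addb; ring.
Qed.

Lemma aff_ext e x f y g : x = y -> f =1 g -> aff e x f = aff e y g.
Proof. by move=> -> Hf; apply/permP => u; rewrite !affE Hf. Qed.

Lemma aff1 : aff false 1%g (fun _ => 0) = 1%g.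
Proof. by apply/permP => -[i j]; rewrite affE !perm1 /= expr0 mul1r addr0. Qed.

Lemma aff1X f c : (aff false 1%g f ^+ c)%g = aff false 1%g (fun i => f i *+ c).
Proof.
elim: c => [|c IH]; first by rewrite expg0 -aff1; apply: aff_ext => // i.
rewrite expgSr IH affM mulg1; apply: aff_ext => // i.
by rewrite perm1 expr0 mul1r mulrSr.
Qed.

End Aff.
Arguments aff {n m} e x f.
Arguments affF {n m} e x f u.

Open Scope group_scope.
Lemma galg_even (gT : finGroupType) (a t p : gT) :
  a * t = t * a * p -> commute t p -> t * a = (a * p^-1) * t.
Proof.
move=> H2 H4.
rewrite -[t * a](mulgK p) -H2 -!mulgA; congr (a * _).
exact: (commuteV H4).
Qed.

Lemma galg_odd (gT : finGroupType) (a b t p : gT) :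
  a * b * (a * b) = 1 -> a * t = t * a * p -> commute a p -> commute t p ->
  t * b * a = (a^-1 * p) * (t * b^-1).
Proof.
move=> H1 H2 H3 H4.
have ba : b * a = a^-1 * b^-1.
  apply: (mulgI a); apply: (mulIg b).
  by rewrite mulKVg mulVg !mulgA -H1 !mulgA.
apply: (mulgI a).
rewrite !mulgA mulgV mul1g -(mulgA (a * t) b a) ba !mulgA H2.
by rewrite -(mulgA t a p) H3 !mulgA mulgK H4.
Qed.

Close Scope group_scope.
Arguments galg_odd {gT a b t p}.
Arguments galg_even {gT a t p}.

Section Main.
Variables n m : nat.
Hypothesis Hodd : odd m.+3.
Hypothesis Hdvd : (m.+3 %| n.+3)%N.
Local Notation N := n.+3.
Local Notation M := m.+3.
Local Notation ZN := 'I_n.+3.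
Local Notation ZM := 'I_m.+3.

Definition delta (i : ZN) : ZM := ((val i == 0%N) : nat)%:R.
Definition Lf (i : ZN) : ZM := if val i == 0%N then 0 else (ell i)%:R.
Definition proj (i : ZN) : ZM := (val i)%:R.

Lemma sigma1E : sigma1 N M = aff false (Defs.rot N) delta.
Proof.
apply/permP => -[i j]; rewrite affE /sigma1 /wreath permE /= expr0 mul1r /delta.
by case: eqP => _; rewrite ?rotE ?perm1 ?addr0.
Qed.

Lemma sigma2E : sigma2 N M = aff true (refl N) Lf.
Proof.
apply/permP => -[i j]; rewrite affE /sigma2 /wreath permE /= expr1 mulN1r /Lf.
by case: eqP => _; rewrite ?permM ?reflE ?rotX ?addr0.
Qed.

Lemma natZN x : ((x %% N)%N%:R : ZM) = x%:R.
Proof. by apply: val_inj; rewrite !Zp_nat /= modn_dvdm. Qed.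

Lemma NZM : (N%:R : ZM) = 0.
Proof. by rewrite -natZN modnn. Qed.

Lemma MZM : (M%:R : ZM) = 0.
Proof. by apply: val_inj; rewrite Zp_nat /= modnn. Qed.

Lemma NZN : (N%:R : ZN) = 0.
Proof. by apply: val_inj; rewrite Zp_nat /= modnn. Qed.

Lemma tri_even x : ((x * x.+1) %/ 2 * 2 = x * x.+1)%N.
Proof. by rewrite divnK // dvdn2 oddM /=; case: (odd x). Qed.

Lemma two_unit : (2%:R : ZM) \is a GRing.unit.
Proof. by have := @unitZpE M 2 isT; rewrite coprimen2 Hodd. Qed.

Lemma modN_eq a b X Y : (a + N * X = b + N * Y)%N -> (a%:R : ZM) = b%:R.
Proof.
move/(congr1 (fun x => x%:R : ZM)).
by rewrite natrD (natrD _ b) !(natrM _ N) NZM !mul0r !addr0.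
Qed.

Lemma KL k : (k < N)%N ->
  ((((N - k.+1) * (N - k)) %/ 2)%N%:R : ZM) = ((k * k.+1) %/ 2)%N%:R.
Proof.
move=> Hk.
have E : ((N - k.+1) * (N - k.+1).+1 + N * (2 * k + 1) = k * k.+1 + N * N)%N.
  have -> : (N - k.+1).+1 = (N - k)%N by lia.
  nia.
apply: (mulIr two_unit); rewrite -!natrM tri_even -(modN_eq _ _ _ _ E).
have -> : (N - k)%N = (N - k.+1).+1 by lia.
by rewrite tri_even.
Qed.

Lemma valN (i : ZN) : val (- i) = ((N - i) %% N)%N.
Proof. by []. Qed.

Lemma valD1 (i : ZN) : val (i + 1) = ((i + 1) %% N)%N.
Proof. by rewrite /= modnDmr. Qed.

Definition rho : {perm ZN * ZM} := aff false 1%g (fun _ => 1).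
Definition tau : {perm ZN * ZM} := aff false 1%g proj.

Lemma tri_step k : (k.+1 * k.+2 %/ 2 = k * k.+1 %/ 2 + k.+1)%N.
Proof.
have -> : (k.+1 * k.+2 = k.+1 * 2 + k * k.+1)%N by ring.
by rewrite divnMDl // addnC.
Qed.

Lemma sig2sq : (sigma2 N M * sigma2 N M)%g = tau.
Proof.
rewrite sigma2E affM /tau; apply: aff_ext.
  by apply/permP => i; rewrite permM !reflE opprK perm1.
move=> i; rewrite reflE /Lf /proj valN /=.
move: (nat_of_ord i) (ltn_ord i) => [|k] Hk.
  by rewrite subn0 modnn /= mulr0 addr0.
have -> : ((N - k.+1) %% N = N - k.+1)%N by rewrite modn_small; lia.
have -> : (N - k.+1 == 0)%N = false by apply/eqP; lia.
rewrite /ell.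
have -> : (N - k.+1).-1 = (N - k.+2)%N by lia.
rewrite /= !natrD KL // tri_step natrD; ring.
Qed.

Lemma ell1 : ell 1 = 1%N. Proof. by []. Qed.

Lemma sig12sq : (sigma1 N M * sigma2 N M * (sigma1 N M * sigma2 N M))%g = 1%g.
Proof.
rewrite sigma1E sigma2E !affM -aff1; apply: aff_ext.
  by apply/permP => i; rewrite !permM !rotE !reflE perm1; ring.
move=> i; rewrite !permM !rotE !reflE.
have -> : - (i + 1) + 1 = - i by ring.
rewrite /delta /Lf !valN !valD1 /=.
move: (nat_of_ord i) (ltn_ord i) => k Hk.
case: k Hk => [|k] Hk.
  rewrite add0n modn_small // subn0 modnn /=.
  have -> : ((N - 1) %% N = N - 1)%N by rewrite modn_small; lia.
  have -> : (N - 1 == 0)%N = false by apply/eqP; lia.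
  rewrite ell1 /=; ring.
have [Ek|Ek] := eqVneq k n.+1.
  subst k; rewrite addn1 modnn subn0 modnn /=.
  have -> : ((N - n.+2) %% N = 1)%N by rewrite modn_small; lia.
  rewrite /= ell1; ring.
have -> : ((k.+1 + 1) %% N = k.+2)%N by rewrite modn_small; lia.
have -> : ((N - k.+2) %% N = N - k.+2)%N by rewrite modn_small; lia.
have -> : ((N - k.+1) %% N = N - k.+1)%N by rewrite modn_small; lia.
have -> : (N - k.+2 == 0)%N = false by apply/eqP; lia.
have -> : (N - k.+1 == 0)%N = false by apply/eqP; lia.
rewrite /= /ell.
have -> : (N - k.+1).-1 = (N - k.+2)%N by lia.
rewrite !natrD KL //; ring.
Qed.

Lemma sig1X c : (sigma1 N M ^+ c)%g =
  aff false (Defs.rot N ^+ c)%g (fun i => \sum_(t < c) delta (i + t%:R)).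
Proof.
elim: c => [|c IH].
  rewrite !expg0 -aff1; apply: aff_ext => // i; by rewrite big_ord0.
rewrite expgSr IH sigma1E affM; apply: aff_ext => [|i]; first by rewrite expgSr.
by rewrite big_ord_recr /= rotX expr0 mul1r.
Qed.

Lemma sum_delta (i : ZN) : \sum_(t < N) delta (i + t%:R) = 1.
Proof.
under eq_bigr => t _ do rewrite natr_Zp.
rewrite -(@reindex_inj _ _ _ _ _ xpredT delta (addrI i)) /= (bigD1 0) //= big1 ?addr0 // => t Ht.
by rewrite /delta; case: eqP => // H; case/eqP: Ht; apply: val_inj.
Qed.

Lemma rotN : (Defs.rot N ^+ N)%g = 1%g.
Proof. by apply/permP => i; rewrite rotX NZN addr0 perm1. Qed.

Lemma sig1N : (sigma1 N M ^+ N)%g = rho.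
Proof. rewrite sig1X rotN /rho; apply: aff_ext => // i; exact: sum_delta. Qed.

Lemma rhoX d : (rho ^+ d)%g = aff false 1%g (fun _ => d%:R).
Proof. by rewrite aff1X. Qed.

Lemma tauX c : (tau ^+ c)%g = aff false 1%g (fun i => proj i *+ c).
Proof. by rewrite aff1X. Qed.

Definition v0 : ZN * ZM := (0, 0).

Lemma natZN0 k : (k%:R : ZN) = 0 -> (N %| k)%N.
Proof. by move/(congr1 val); rewrite Zp_nat /= => H; rewrite /dvdn H. Qed.

Lemma natZM0 k : (k%:R : ZM) = 0 -> (M %| k)%N.
Proof. by move/(congr1 val); rewrite Zp_nat /= => H; rewrite /dvdn H. Qed.

Lemma fix_sig1 k : (sigma1 N M ^+ k)%g v0 = v0 -> (M * N %| k)%N.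
Proof.
move=> H.
have Hk : (N %| k)%N.
  move: H; rewrite sig1X affE rotX add0r => /(congr1 fst) /=; exact: natZN0.
move: H; rewrite -(divnK Hk) mulnC expgM sig1N rhoX affE /= mulr0 add0r.
move=> /(congr1 snd) /= /natZM0 HM.
by rewrite [in X in (_ %| X)%N]mulnC dvdn_pmul2r.
Qed.

Lemma sig1_MN : (sigma1 N M ^+ (M * N))%g = 1%g.
Proof. by rewrite mulnC expgM sig1N rhoX MZM aff1. Qed.

Lemma order_sig1 : #[sigma1 N M]%g = (M * N)%N.
Proof.
apply/eqP; rewrite eqn_dvd; apply/andP; split.
  by rewrite order_dvdn sig1_MN.
by apply: fix_sig1; rewrite expg_order perm1.
Qed.

Lemma aff_eq1 e (x : {perm ZN}) (f : ZN -> ZM) : aff e x f = 1%g -> x = 1%g.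
Proof.
move=> H; apply/permP => i; move/permP/(_ (i, 0)): H.
by rewrite affE perm1 perm1 => /(congr1 fst).
Qed.

Lemma ZN_1_neq0 : (1 : ZN) != 0.
Proof. by []. Qed.

Lemma ZN_N1_neq1 : (-1 : ZN) != 1.
Proof.
apply/eqP => H; have : (1 + 1 : ZN) = 0 by rewrite -{1}H addNr.
by move/(congr1 val) => /=; rewrite !modn_small.
Qed.

Lemma refl_neq1 : refl N != 1%g.
Proof.
by apply/eqP => /permP/(_ 1); rewrite reflE perm1; apply/eqP; exact: ZN_N1_neq1.
Qed.

Lemma expg2' (gT : finGroupType) (x : gT) : (x ^+ 2 = x * x)%g.
Proof. by rewrite expgS expg1. Qed.

Lemma sig2_2M : (sigma2 N M ^+ (2 * M))%g = 1%g.
Proof.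
rewrite expgM expg2' sig2sq tauX -aff1; apply: aff_ext => // i.
by rewrite -mulr_natr MZM mulr0.
Qed.

Lemma proj1 : proj 1 = 1.
Proof. by rewrite /proj /= modn_small. Qed.

Lemma order_sig2 : #[sigma2 N M]%g = (2 * M)%N.
Proof.
apply/eqP; rewrite eqn_dvd; apply/andP; split.
  by rewrite order_dvdn sig2_2M.
have := expg_order (sigma2 N M).
move: #[_]%g => k.
rewrite -[k]odd_double_half -muln2 mulnC expgD expgM expg2' sig2sq tauX.
case: (odd k) => /=.
  rewrite expg1 sigma2E affM => /aff_eq1; rewrite mulg1 => H.
  by case/eqP: refl_neq1.
rewrite expg0 mul1g => /permP/(_ (1, 0)); rewrite affE perm1 /= mulr0 add0r.
rewrite perm1 proj1 => /(congr1 snd) /= /natZM0 HM.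
by rewrite add0n dvdn_pmul2l.
Qed.

Lemma order_sig12 : #[(sigma1 N M * sigma2 N M)%g]%g = 2.
Proof.
have H1 : (#[(sigma1 N M * sigma2 N M)%g]%g %| 2)%N.
  by rewrite order_dvdn expg2' sig12sq.
have H2 : (#[(sigma1 N M * sigma2 N M)%g]%g != 1)%N.
  rewrite order_eq1 sigma1E sigma2E affM; apply/eqP => /aff_eq1 /permP/(_ 0).
  rewrite permM rotE reflE perm1 add0r; apply/eqP.
  by rewrite oppr_eq0.
have := order_gt0 (sigma1 N M * sigma2 N M)%g.
have := dvdn_leq (isT : (0 < 2)%N) H1.
move: H1 H2; move: #[_]%g => d; case: d => [|[|[|d]]] //.
Qed.

Lemma proj_add1 i : proj (i + 1) = proj i + 1.
Proof. by rewrite /proj valD1 natZN natrD. Qed.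

Local Notation a := (sigma1 N M).
Local Notation b := (sigma2 N M).

Lemma F2 c : (a * tau ^+ c = tau ^+ c * a * rho ^+ c)%g.
Proof.
rewrite sigma1E tauX rhoX !affM; apply: aff_ext => [|i].
  by rewrite !mulg1 mul1g.
by rewrite !perm1 !expr0 !mul1r rotE proj_add1 mulrnDl; ring.
Qed.

Lemma F3 c : commute a (rho ^+ c)%g.
Proof. by rewrite -sig1N -expgM; apply: commuteX. Qed.

Lemma F4 c : commute (tau ^+ c)%g (rho ^+ c)%g.
Proof.
rewrite /commute tauX rhoX !affM; apply: aff_ext => [|i] //.
by rewrite !perm1 !expr0 !mul1r addrC.
Qed.

Lemma tau_in c : (tau ^+ c)%g \in <[b]>%g.
Proof. by rewrite -sig2sq -expg2' -expgM mem_cycle. Qed.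

Lemma rho_in c : (rho ^+ c)%g \in <[a]>%g.
Proof. by rewrite -sig1N -expgM mem_cycle. Qed.

Lemma claim_gen k : k \in <[b]>%g -> (k * a)%g \in (<[a]> * <[b]>)%g.
Proof.
case/cycleP => l ->.
rewrite -[l]odd_double_half -muln2 addnC expgD mulnC expgM expg2' sig2sq.
case: (odd l) => /=.
  rewrite expg1 (galg_odd sig12sq (F2 _) (F3 _) (F4 _)).
  by rewrite mem_mulg // ?groupM ?groupV ?cycle_id ?rho_in ?tau_in.
rewrite expg0 mulg1 (galg_even (F2 _) (F4 _)).
by rewrite mem_mulg // ?groupM ?groupV ?cycle_id ?rho_in ?tau_in.
Qed.

Lemma claim k h : k \in <[b]>%g -> h \in <[a]>%g -> (k * h)%g \in (<[a]> * <[b]>)%g.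
Proof.
move=> Hk /cycleP [j ->]; elim: j => [|j IH].
  by rewrite expg0 mulg1 -[k]mul1g mem_mulg.
rewrite expgSr mulgA; case/mulsgP: IH => h1 k1 Hh1 Hk1 ->.
rewrite -mulgA; case/mulsgP: (claim_gen _ Hk1) => h2 k2 Hh2 Hk2 ->.
by rewrite mulgA mem_mulg ?groupM.
Qed.

Lemma HK_group : group_set (<[a]> * <[b]>)%g.
Proof.
apply/group_setP; split; first by rewrite -[1%g]mulg1 mem_mulg.
move=> x y /mulsgP [h1 k1 Hh1 Hk1 ->] /mulsgP [h2 k2 Hh2 Hk2 ->].
rewrite -mulgA (mulgA k1); case/mulsgP: (claim _ _ Hk1 Hh2) => h3 k3 Hh3 Hk3 ->.
by rewrite -(mulgA h3) (mulgA h1) mem_mulg ?groupM.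
Qed.

Lemma b_fix l : (b ^+ l)%g v0 = v0.
Proof.
elim: l => [|l IH]; first by rewrite expg0 perm1.
rewrite expgSr permM IH sigma2E affE /= reflE oppr0 mulr0 add0r /Lf /=.
by [].
Qed.

Lemma HK_TI : (<[a]> :&: <[b]> = 1)%g.
Proof.
apply/trivgP/subsetP => x /setIP [/cycleP [k ->] /cycleP [l El]].
apply/set1P; have : (a ^+ k)%g v0 = v0 by rewrite El b_fix.
move/fix_sig1 => /dvdnP [q ->].
by rewrite mulnC expgM sig1_MN expg1n.
Qed.

Lemma main_nm :
  [/\ #[a]%g = (M * N)%N, #[b]%g = (2 * M)%N, #[(a * b)%g]%g = 2
    & #|<<[set a; b]>>%g| = (2 * M ^ 2 * N)%N].
Proof.
split; [exact: order_sig1 | exact: order_sig2 | exact: order_sig12 |].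
have E : <<[set a; b]>>%g = (<[a]> * <[b]>)%g.
  apply/eqP; rewrite eqEsubset; apply/andP; split.
    rewrite -[(<[a]> * <[b]>)%g]/(gval (Group HK_group)) gen_subG.
    change ([set a; b] \subset (<[a]> * <[b]>)%g).
    apply/subsetP => x /set2P [->|->].
      by have := mem_mulg (cycle_id a) (group1 <[b]>%g); rewrite mulg1.
    by have := mem_mulg (group1 <[a]>%g) (cycle_id b); rewrite mul1g.
  by rewrite mulG_subG !cycle_subG !mem_gen // !inE eqxx ?orbT.
rewrite E (TI_cardMg HK_TI).
have -> : #|<[a]>%g| = #[a]%g by [].
have -> : #|<[b]>%g| = #[b]%g by [].
rewrite order_sig1 order_sig2; ring.
Qed.

End Main.

Local Close Scope ring_scope.

Theorem lemma4p1 (m s : nat) (hm : 3 <= m) (hodd : odd m) (hs : 0 < s) :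
  let n := s * m in
  [/\ #[sigma1 n m]%g = m * n,
      #[sigma2 n m]%g = 2 * m,
      #[(sigma1 n m * sigma2 n m)%g]%g = 2
    & #|<<[set sigma1 n m; sigma2 n m]>>%g| = 2 * m ^ 2 * n].
Proof.
case: m hm hodd => [|[|[|m']]] // _ hodd.
have [n' Hn] : exists n', s * m'.+3 = n'.+3.
  exists (s * m'.+3 - 3); lia.
move=> n; rewrite /n {n}; rewrite Hn.
apply: main_nm => //.
by rewrite -Hn dvdn_mull.
Qed.
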